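(* Let $\kappa=\frac4{27}$. For every positive integer $n$ and every $x$, $$\frac{(n+1)(3n+2)x}{6\kappa}\,{}_3F_2\left[\begin{matrix}-n,\frac{n+3}2,\frac{n+2}2\\ \frac43,\frac53\end{matrix};x\right]+{}_3F_2\left[\begin{matrix}-n-1,\frac{n+2}2,\frac{n+1}2\\ \frac13,\frac23\end{matrix};x\right]-{}_3F_2\left[\begin{matrix}-n,\frac{n+1}2,\frac n2\\ \frac13,\frac23\end{matrix};x\right]=0,$$ $$\frac{(n+1)(n+2)x}{2\kappa}\,{}_3F_2\left[\begin{matrix}-n,\frac{n+4}2,\frac{n+3}2\\ \frac43,\frac53\end{matrix};x\right]+{}_3F_2\left[\begin{matrix}-n-1,\frac{n+2}2,\frac{n+3}2\\ \frac13,\frac23\end{matrix};x\right]-{}_3F_2\left[\begin{matrix}-n,\frac{n+1}2,\frac{n+2}2\\ \frac13,\frac23\end{matrix};x\right]=0.$$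
   Context: ${}_3F_2\left[\begin{matrix}a_1,a_2,a_3\\ b_1,b_2\end{matrix};x\right]=\sum_{k\ge0}\frac{(a_1)_k(a_2)_k(a_3)_k}{(b_1)_k(b_2)_k}\frac{x^k}{k!}$, $(x)_k=x(x+1)\cdots(x+k-1)$, $(x)_0=1$; with $a_1$ a nonpositive integer these are polynomials in $x$. *)

(* Defs.v *)
From mathcomp Require Import all_boot all_order all_algebra.
Set Implicit Arguments. Unset Strict Implicit. Unset Printing Implicit Defensive.
Import Order.TTheory GRing.Theory Num.Theory.
Local Open Scope ring_scope.

Definition poch (R : fieldType) (a : R) (k : nat) : R :=
  \prod_(i < k) (a + i%:R).

(* Terminating 3F2 with first numerator parameter a1 = -m (m : nat):
   3F2[-m, a2, a3; b1, b2; x] = sum_{k >= 0} (-m)_k (a2)_k (a3)_k / ((b1)_k (b2)_k) x^k / k!.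
   Since (-m)_k = 0 for k > m, the series is the finite sum over k = 0..m. *)
Definition F32neg (R : fieldType) (m : nat) (a2 a3 b1 b2 x : R) : R :=
  \sum_(k < m.+1)
    (poch (- m%:R) k * poch a2 k * poch a3 k) / (poch b1 k * poch b2 k)
      * x ^+ k / (k`!)%:R.

(* Main.v *)
Require Import Defs.
From mathcomp Require Import all_boot all_order all_algebra.
From mathcomp Require Import ring.
Import Order.TTheory GRing.Theory Num.Theory.
Local Open Scope ring_scope.

Section S.
Variable R : numFieldType.

Definition T (m : nat) (a2 a3 b1 b2 : R) (k : nat) : R :=
  poch (- m%:R) k * poch a2 k * poch a3 k / (poch b1 k * poch b2 k) / (k`!)%:R.

Lemma pochS (a : R) k : poch a k.+1 = a * poch (a + 1) k.
Proof.
rewrite /poch big_ord_recl /= addr0; congr (_ * _).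
by apply: eq_bigr => i _; rewrite /= -natr1; ring.
Qed.

Lemma pochSr (a : R) k : poch a k.+1 = poch a k * (a + k%:R).
Proof. by rewrite /poch big_ord_recr. Qed.

Lemma pochS1 (a : R) k : a != 0 -> poch (a + 1) k = poch a k * (a + k%:R) / a.
Proof. by move=> a0; rewrite -pochSr pochS mulrC mulrA mulVf // mul1r. Qed.

Lemma poch_gt0 (b : R) k : 0 < b -> 0 < poch b k.
Proof. by move=> b0; apply: prodr_gt0 => i _; apply: ltr_wpDr. Qed.

Lemma poch_neq0 (b : R) k : 0 < b -> poch b k != 0.
Proof. by move=> b0; rewrite gt_eqF // poch_gt0. Qed.

Lemma poch0 (a : R) : poch a 0 = 1.
Proof. by rewrite /poch big_ord0. Qed.

Lemma poch_neg0 m : poch (- (m%:R : R)) m.+1 = 0.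
Proof. by rewrite pochSr addNr mulr0. Qed.

Lemma F32T m a2 a3 b1 b2 (x : R) :
  F32neg m a2 a3 b1 b2 x = \sum_(k < m.+1) T m a2 a3 b1 b2 k * x ^+ k.
Proof. by apply: eq_bigr => k _; rewrite /T mulrAC. Qed.

Lemma T0 m a2 a3 b1 b2 : T m a2 a3 b1 b2 0 = 1.
Proof. by by rewrite /T !poch0 !mul1r invr1 mulr1. Qed. Lemma XX : True. Proof. by []. Qed.

Lemma Tlast m a2 a3 b1 b2 : T m a2 a3 b1 b2 m.+1 = 0.
Proof. by rewrite /T poch_neg0 !mul0r. Qed.

Lemma combine m (F G H : 'I_m -> R) a b :
  (forall i, F i + G i - H i = 0) -> a = b ->
  \sum_i F i + (a + \sum_i G i) - (b + \sum_i H i) = 0.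
Proof.
move=> h ->.
have E : \sum_i (F i + G i - H i) = 0 by apply: big1 => i _; exact: h.
move: E; rewrite !big_split /= sumrN => E.
by rewrite -[RHS]E; ring.
Qed.

Lemma pos (a b : nat) : (0 < a)%N -> (0 < b)%N -> 0 < (a%:R / b%:R : R).
Proof. by move=> ha hb; rewrite divr_gt0 // ltr0n. Qed.


Lemma coef1 (n k : nat) : (0 < n)%N -> let N : R := n%:R in
  (N + 1) * (3 * N + 2) / (6 * (4 / 27)) * T n ((N + 3) / 2) ((N + 2) / 2) (4 / 3) (5 / 3) k
  + T n.+1 ((N + 2) / 2) ((N + 1) / 2) (1 / 3) (2 / 3) k.+1
  - T n ((N + 1) / 2) (N / 2) (1 / 3) (2 / 3) k.+1 = 0.
Proof.
move=> n0 N; rewrite /T !pochS factS natrM.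
have e1 : - (n.+1)%:R + 1 = - (n%:R) :> R by rewrite -natr1; ring.
have e2 : (N + 1) / 2 + 1 = (N + 3) / 2 :> R by field.
have e3 : 1 / 3 + 1 = 4 / 3 :> R by field.
have e4 : 2 / 3 + 1 = 5 / 3 :> R by field.
have e5 : N / 2 + 1 = (N + 2) / 2 :> R by field.
rewrite e1 e2 e3 e4 e5.
have N0 : (n%:R : R) != 0 by rewrite pnatr_eq0 -lt0n.
have Np : 0 < (N + 2) / 2 by rewrite divr_gt0 // /N ltr_wpDl // ler0n.
rewrite !pochS1 ?oppr_eq0 ?(gt_eqF Np) //.
have d1 := poch_neq0 (4/3) k (pos 4 3 isT isT).
have d2 := poch_neq0 (5/3) k (pos 5 3 isT isT).
have f0 : (k`!%:R : R) != 0 by rewrite pnatr_eq0 -lt0n fact_gt0.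
have k0 : (k.+1%:R : R) != 0 by rewrite pnatr_eq0.
have k1 : 1 + (k%:R : R) != 0 by rewrite addrC natr1 pnatr_eq0.
have n2 : (n%:R : R) + 2 != 0 by rewrite gt_eqF // ltr_wpDl ?ler0n.
rewrite /N; field.
by rewrite f0 k1 d1 d2 N0 n2.
Qed.

Lemma coef2 (n k : nat) : (0 < n)%N -> let N : R := n%:R in
  (N + 1) * (N + 2) / (2 * (4 / 27)) * T n ((N + 4) / 2) ((N + 3) / 2) (4 / 3) (5 / 3) k
  + T n.+1 ((N + 2) / 2) ((N + 3) / 2) (1 / 3) (2 / 3) k.+1
  - T n ((N + 1) / 2) ((N + 2) / 2) (1 / 3) (2 / 3) k.+1 = 0.
Proof.
move=> n0 N; rewrite /T !pochS factS natrM.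
have e1 : - (n.+1)%:R + 1 = - (n%:R) :> R by rewrite -natr1; ring.
have e2 : (N + 1) / 2 + 1 = (N + 3) / 2 :> R by field.
have e3 : 1 / 3 + 1 = 4 / 3 :> R by field.
have e4 : 2 / 3 + 1 = 5 / 3 :> R by field.
have e5 : (N + 2) / 2 + 1 = (N + 4) / 2 :> R by field.
rewrite e1 e2 e3 e4 e5.
have N0 : (n%:R : R) != 0 by rewrite pnatr_eq0 -lt0n.
have Np : 0 < (N + 3) / 2 by rewrite divr_gt0 // /N ltr_wpDl // ler0n.
rewrite !pochS1 ?oppr_eq0 ?(gt_eqF Np) //.
have d1 := poch_neq0 (4/3) k (pos 4 3 isT isT).
have d2 := poch_neq0 (5/3) k (pos 5 3 isT isT).
have f0 : (k`!%:R : R) != 0 by rewrite pnatr_eq0 -lt0n fact_gt0.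
have k1 : 1 + (k%:R : R) != 0 by rewrite addrC natr1 pnatr_eq0.
have n2 : (n%:R : R) + 3 != 0 by rewrite gt_eqF // ltr_wpDl ?ler0n.
rewrite /N; field.
by rewrite f0 k1 d1 d2 N0 n2.
Qed.

Lemma extend m a2 a3 b1 b2 (x : R) :
  \sum_(k < m.+1) T m a2 a3 b1 b2 k * x ^+ k = \sum_(k < m.+2) T m a2 a3 b1 b2 k * x ^+ k.
Proof. by rewrite [RHS]big_ord_recr /= Tlast mul0r addr0. Qed.

End S.

Theorem proposition7 (R : numFieldType) (n : nat) (x : R) :
  (0 < n)%N ->
  let kappa : R := 4 / 27 in
  let N : R := n%:R in
  ((N + 1) * (3 * N + 2) * x / (6 * kappa)
      * F32neg n ((N + 3) / 2) ((N + 2) / 2) (4 / 3) (5 / 3) x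
    + F32neg n.+1 ((N + 2) / 2) ((N + 1) / 2) (1 / 3) (2 / 3) x
    - F32neg n ((N + 1) / 2) (N / 2) (1 / 3) (2 / 3) x = 0)
  /\
  ((N + 1) * (N + 2) * x / (2 * kappa)
      * F32neg n ((N + 4) / 2) ((N + 3) / 2) (4 / 3) (5 / 3) x
    + F32neg n.+1 ((N + 2) / 2) ((N + 3) / 2) (1 / 3) (2 / 3) x
    - F32neg n ((N + 1) / 2) ((N + 2) / 2) (1 / 3) (2 / 3) x = 0).
Proof.
move=> n0 kappa N; split.
- rewrite !F32T (@extend R n ((N + 1) / 2)) [X in _ + X - _]big_ord_recl [X in _ - X]big_ord_recl /= mulr_sumr.
  apply: combine; last by rewrite !T0.
  move=> i; have := @coef1 R n i n0; rewrite -/N /kappa => E.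
  rewrite /bump /= !add1n exprS.
  rewrite -[RHS](mulr0 (x * x ^+ i)) -E; ring.
- rewrite !F32T (@extend R n ((N + 1) / 2)) [X in _ + X - _]big_ord_recl [X in _ - X]big_ord_recl /= mulr_sumr.
  apply: combine; last by rewrite !T0.
  move=> i; have := @coef2 R n i n0; rewrite -/N /kappa => E.
  rewrite /bump /= !add1n exprS.
  rewrite -[RHS](mulr0 (x * x ^+ i)) -E; ring.
Qed.
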